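(* Let $T$ be a tournament, let $v\in V(T)$ and let $c\in\mathbb{N}$ with $c\ge 2$. Suppose that $d^+_T(v)\ge 2^{c-1}$. Then there exist disjoint sets $B,E\subseteq V(T)$ and a vertex $b\in B$ such that: (i) $2\le |B|\le c$ and $T[B]$ is a transitive tournament with sink $b$ and source $v$; (ii) $B\setminus\{b\}$ in-dominates $V(T)\setminus(B\cup E)$; (iii) $|E|\le (1/2)^{c-2} d^+_T(v)$.
   Context: $d^+_T(v)$ is the out-degree of $v$ in $T$. A tournament is transitive if its vertices can be enumerated $v_1,\dots,v_m$ so that $v_iv_j$ is an edge iff $i<j$; then $v_1$ is its source and $v_m$ its sink. A set $B$ in-dominates a set $C$ if for every $x\in C$ there is $b'\in B$ with $xb'\in E(T)$. *)

(* Defs.v *)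
From mathcomp Require Import all_boot.
Set Implicit Arguments. Unset Strict Implicit. Unset Printing Implicit Defensive.

Definition tournament (V : finType) (T : rel V) : Prop :=
  (forall x, ~~ T x x) /\
  (forall x y, x != y -> (T x y || T y x)) /\
  (forall x y, T x y -> ~~ T y x).

Definition outdeg (V : finType) (T : rel V) (v : V) : nat :=
  #|[set y | T v y]|.

(* T[B] is transitive: B's vertices can be enumerated v_1..v_m (the sequence s)
   so that v_i v_j is an edge iff i < j; source v_1 = src, sink v_m = snk. *)
Definition transitive_src_sink (V : finType) (T : rel V) (B : {set V})
  (src snk : V) : Prop :=
  exists s : seq V,
    [/\ uniq s, [set x in s] = B,
        (forall i j, i < size s -> j < size s ->
           T (nth src s i) (nth src s j) = (i < j)),
        head snk s = src & last src s = snk].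

Definition in_dominates (V : finType) (T : rel V) (B C : {set V}) : Prop :=
  forall x, x \in C -> exists2 b', b' \in B & T x b'.

(* Main.v *)
Require Import Defs.
From mathcomp Require Import all_boot zify.

Lemma sum_neq (V : finType) (S : {set V}) z : z \in S ->
  \sum_(x in S) (x != z : nat) = #|S| - 1.
Proof.
move=> zS; rewrite (bigD1 z) //= eqxx add0n.
rewrite (eq_bigr (fun _ => 1)); last by move=> x /andP[_ ->].
rewrite sum1_card (cardD1 z S) zS add1n subn1 /=.
by apply: eq_card => x; rewrite !inE andbC.
Qed.

Lemma od_sum (V : finType) (T : rel V) (tT : tournament T) (S : {set V}) :
  2 * \sum_(u in S) #|[set x in S | T u x]| = #|S| * (#|S| - 1).
Proof.
case: tT => irr [tot anti].
have E u : #|[set x in S | T u x]| = \sum_(x in S) (T u x : nat).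
  rewrite -sum1_card big_mkcond [RHS]big_mkcond /=.
  by apply: eq_bigr => x _; rewrite inE; case: (x \in S); case: (T u x).
rewrite (eq_bigr _ (fun u _ => E u)).
have -> : 2 * \sum_(u in S) \sum_(x in S) (T u x : nat)
   = \sum_(u in S) \sum_(x in S) (T u x : nat) + \sum_(u in S) \sum_(x in S) (T x u : nat).
  by rewrite [X in _ + X]exchange_big mul2n -addnn.
rewrite -big_split /=.
rewrite (eq_bigr (fun _ => #|S| - 1)); last first.
  move=> u uS; rewrite -big_split /= -(@sum_neq _ _ _ uS).
  apply: eq_bigr => x _.
  case: (eqVneq x u) => [->|ne]; first by rewrite (negbTE (irr u)).
  have := tot x u ne; have := anti x u.
  by case: (T x u); case: (T u x) => // /(_ isT).
by rewrite sum_nat_const.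
Qed.

Lemma good (V : finType) (T : rel V) (tT : tournament T) (S : {set V}) :
  2 <= #|S| ->
  exists2 u, u \in S & 0 < #|[set x in S | T u x]| /\ 2 * #|[set x in S | T u x]| <= #|S|.
Proof.
move=> hS.
have tT' := tT; case: tT' => irr [tot anti].
have [z zS hz] : exists2 z, z \in S & forall u, u \in S -> u != z -> 0 < #|[set x in S | T u x]|.
  case: (boolP [exists u in S, #|[set x in S | T u x]| == 0]).
  - case/exists_inP => z zS /eqP oz; exists z => // u uS nuz.
    have hT : T u z.
      have := tot u z nuz; case/orP => // hzu; exfalso.
      have : 0 < #|[set x in S | T z x]|.
        by rewrite card_gt0; apply/set0Pn; exists u; rewrite inE uS hzu.
      by rewrite oz.
    by rewrite card_gt0; apply/set0Pn; exists z; rewrite inE zS.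
  - move/exists_inPn => h.
    have : 0 < #|S| by lia.
    case/card_gt0P => z zS; exists z => // u uS _.
    by rewrite lt0n h.
case: (boolP [exists u in S, (0 < #|[set x in S | T u x]|) && (2 * #|[set x in S | T u x]| <= #|S|)]).
  by case/exists_inP => u uS /andP[h1 h2]; exists u.
move/exists_inPn => hn; exfalso.
have h1 : \sum_(u in S) #|S|.+1 * (u != z) <= \sum_(u in S) 2 * #|[set x in S | T u x]|.
  apply: leq_sum => u uS; case: (eqVneq u z) => [->|nuz] /=; first by rewrite muln0.
  have := hn u uS; rewrite (hz u uS nuz) /= -ltnNge; lia.
move: h1; rewrite -big_distrr -big_distrr /= sum_neq // od_sum //.
nia.
Qed.

Lemma chain_rcons (V : finType) (T : rel V) (v u : V) (s : seq V) :
  (forall i j, i < j -> j < size s -> T (nth v s i) (nth v s j)) ->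
  (forall y, y \in s -> T y u) ->
  forall i j, i < j -> j < size (rcons s u) -> T (nth v (rcons s u) i) (nth v (rcons s u) j).
Proof.
move=> hc hu i j ij; rewrite size_rcons ltnS leq_eqVlt => /orP[/eqP ej|js].
- subst j; rewrite !nth_rcons ij ltnn eqxx; exact: hu (mem_nth v ij).
- rewrite !nth_rcons js (ltn_trans ij js); exact: hc.
Qed.

Lemma chain_iff (V : finType) (T : rel V) (tT : tournament T) (v : V) (s : seq V) :
  (forall i j, i < j -> j < size s -> T (nth v s i) (nth v s j)) ->
  forall i j, i < size s -> j < size s -> T (nth v s i) (nth v s j) = (i < j).
Proof.
case: tT => irr [tot anti] hc i j hi hj.
case: (ltngtP i j) => [ij|ji|->].
- exact: hc.
- exact/negbTE/anti/hc.
- exact/negbTE/irr.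
Qed.

Lemma main (V : finType) (T : rel V) (v : V) (c : nat) (tT : tournament T)
  (c2 : 2 <= c) (hd : 2 ^ c.-1 <= outdeg T v) :
 forall n (t : seq V) (S : {set V}), #|S| <= n ->
  uniq (v :: t) ->
  (forall i j, i < j -> j < size (v::t) -> T (nth v (v::t) i) (nth v (v::t) j)) ->
  (forall y x, y \in v :: t -> x \in S -> T y x) ->
  (forall x, x \notin v :: t -> x \notin S -> exists2 y, y \in v :: t & T x y) ->
  0 < #|S| -> (size t).+1 <= c.-1 -> 2 ^ (size t) * #|S| <= outdeg T v ->
  exists (B E : {set V}) (b : V),
    [/\ [disjoint B & E], b \in B,
        (2 <= #|B| <= c) /\ transitive_src_sink T B v b,
        in_dominates T (B :\ b) (~: (B :|: E))
      & 2 ^ (c - 2) * #|E| <= outdeg T v].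
Proof.
have tT' := tT; case: tT' => irr [tot anti].
elim=> [|n IH] t S hn hu hc hS hdom hS0 hsz hbd; first lia.
have notin : forall w, w \in S -> w \notin v :: t.
  by move=> w wS; apply/negP => hw; have := irr w; rewrite (hS w w hw wS).
have [u uS] : exists u, u \in S by apply/card_gt0P.
have unot := notin u uS.
case: (leqP (2 ^ (c - 2) * #|S|) (outdeg T v)) => hstop.
- have hu' : uniq (rcons (v::t) u) by rewrite rcons_uniq unot hu.
  exists [set x in rcons (v::t) u], (S :\ u), u.
  split.
  + rewrite -setI_eq0; apply/eqP/setP => x.
    rewrite in_setI in_setD1 in_set mem_rcons in_cons in_set0.
    case: (eqVneq x u) => //= _.
    apply/negP => /andP[hx hxS]; have := irr x; by rewrite (hS x x hx hxS).
  + by rewrite in_set mem_rcons mem_head.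
  + split.
    * rewrite cardsE (card_uniqP hu') size_rcons /=. lia.
    * exists (rcons (v::t) u); split => //.
      - apply: chain_iff => //; apply: chain_rcons => // y hy; exact: hS.
      - by rewrite last_rcons.
  + move=> x; rewrite in_setC in_setU negb_or => /andP[].
    rewrite in_set mem_rcons in_cons negb_or => /andP[nxu nxs].
    rewrite in_setD1 nxu /= => nxS.
    have [y ys Txy] := hdom x nxs nxS; exists y => //.
    rewrite in_setD1 in_set -rcons_cons mem_rcons in_cons ys orbT andbT.
    by apply/eqP => yu; subst y; rewrite ys in unot.
  + apply: leq_trans hstop; rewrite leq_mul2l; apply/orP; right.
    apply: subset_leq_card; apply: subD1set.
- have h2 : 2 ^ c.-1 = 2 * 2 ^ (c - 2).
    by rewrite -expnS; congr (2 ^ _); lia.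
  have hsz2 : (size t).+2 <= c.-1.
    case: (ltnP (size t).+1 (c.-1)) => // hge.
    have e : size t = c - 2 by lia.
    rewrite e in hbd; lia.
  have hS2 : 2 <= #|S| by nia.
  have [w wS [hw1 hw2]] := @good _ _ tT _ hS2.
  have wnot := notin w wS.
  apply: (IH (rcons t w) [set x in S | T w x]).
  + lia.
  + by rewrite -rcons_cons rcons_uniq wnot hu.
  + rewrite -rcons_cons; apply: chain_rcons => // y hy; exact: hS.
  + move=> y x; rewrite -rcons_cons mem_rcons in_cons => /orP[/eqP->|hy];
      rewrite inE => /andP[xS Twx] //; exact: hS.
  + move=> x; rewrite -rcons_cons mem_rcons in_cons negb_or => /andP[nxw nxs].
    rewrite inE negb_and => hx.
    case xS: (x \in S).
    * rewrite xS /= in hx.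
      exists w; first by rewrite mem_rcons mem_head.
      by have := tot x w nxw; rewrite (negbTE hx) orbF.
    * have [y ys Txy] := hdom x nxs (negbT xS).
      by exists y => //; rewrite mem_rcons in_cons ys orbT.
  + by [].
  + by rewrite size_rcons.
  + apply: leq_trans hbd; rewrite size_rcons expnS (mulnC 2) -mulnA leq_mul2l hw2 orbT //.
Qed.

Theorem lemma2p4 (V : finType) (T : rel V) (v : V) (c : nat) :
  tournament T -> 2 <= c -> 2 ^ c.-1 <= outdeg T v ->
  exists (B E : {set V}) (b : V),
    [/\ [disjoint B & E], b \in B,
        (2 <= #|B| <= c) /\ transitive_src_sink T B v b,
        in_dominates T (B :\ b) (~: (B :|: E))
      & 2 ^ (c - 2) * #|E| <= outdeg T v].
Proof.
move=> tT c2 hd.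
have tT' := tT; case: tT' => irr [tot anti].
have hpos : 0 < 2 ^ c.-1 by rewrite expn_gt0.
apply: (@main V T v c tT c2 hd #|[set y | T v y]| [::] [set y | T v y]) => //.
- move=> i j ij /=; lia.
- by move=> y x; rewrite mem_seq1 => /eqP ->; rewrite inE.
- move=> x; rewrite inE => nxv; rewrite inE => nT.
  exists v; first exact: mem_head.
  by have := tot x v nxv; rewrite (negbTE nT) orbF.
- by apply: leq_trans hd.
- simpl; lia.
- by rewrite expn0 mul1n.
Qed.
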